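(* For $s>0$ define polynomials $P_m(u,v;s)$, $Q_m(u,v;s)$, $m\ge1$, by $P_1(u,v;s)=-2su$, $Q_1(u,v;s)=-2sv$ and $$P_{m+1}(u,v;s)=(u^2+v^2)\frac{\partial P_m}{\partial u}(u,v;s)-2(s+m)uP_m(u,v;s),$$ $$Q_{m+1}(u,v;s)=(u^2+v^2)\frac{\partial Q_m}{\partial v}(u,v;s)-2(s+m)vQ_m(u,v;s).$$ Then for all $(u,v)\in\mathbb{R}^2\setminus\{(0,0)\}$, all $s>0$ and all positive integers $m$, $P_m(u,v;s)=Q_m(v,u;s)$. *)

(* Defs.v *)
From HB Require Import structures.
From mathcomp Require Import all_boot all_algebra.
From mathcomp Require Import mpoly.
Set Implicit Arguments. Unset Strict Implicit. Unset Printing Implicit Defensive.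
Import GRing.Theory Num.Theory.
Local Open Scope ring_scope.

(* Bivariate polynomials in (u,v) = ('X_0, 'X_1) over a real field R,
   with the real parameter s appearing in the coefficients. *)
Section PQ.
Variable R : realFieldType.
Variable s : R.

Definition Xu : {mpoly R[2]} := 'X_(ord0 : 'I_2).
Definition Xv : {mpoly R[2]} := 'X_(ord_max : 'I_2).

(* Paux k = P_{k+1} *)
Fixpoint Paux (k : nat) : {mpoly R[2]} :=
  match k with
  | 0 => (-2 * s) *: Xu
  | k'.+1 => (Xu ^+ 2 + Xv ^+ 2) * mderiv ord0 (Paux k')
             - (2 * (s + k'.+1%:R)) *: (Xu * Paux k')
  end.

(* Qaux k = Q_{k+1} *)
Fixpoint Qaux (k : nat) : {mpoly R[2]} :=
  match k with
  | 0 => (-2 * s) *: Xv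
  | k'.+1 => (Xu ^+ 2 + Xv ^+ 2) * mderiv ord_max (Qaux k')
             - (2 * (s + k'.+1%:R)) *: (Xv * Qaux k')
  end.

Definition Pm (m : nat) : {mpoly R[2]} := Paux m.-1.
Definition Qm (m : nat) : {mpoly R[2]} := Qaux m.-1.
End PQ.

Definition pt (R : realFieldType) (u v : R) : 'I_2 -> R :=
  fun i => if i == ord0 then u else v.

(* Main.v *)
Require Import Defs.
From HB Require Import structures.
From mathcomp Require Import all_boot all_algebra.
From mathcomp Require Import mpoly.
From mathcomp Require Import fingroup perm.
From Stdlib Require Import FunctionalExtensionality.
Import GRing.Theory Num.Theory.
Local Open Scope ring_scope.

Section Aux.
Variable R : realFieldType.

Definition sw : 'S_2 := tperm ord0 ord_max.

Lemma sw_max_eq (i : 'I_2) : (ord_max == sw i) = (ord0 == i).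
Proof.
have E0 : sw ord0 = ord_max by rewrite /sw tpermL.
have E1 : sw ord_max = ord0 by rewrite /sw tpermR.
case: i => [[|[|k]] Hk] //.
- have -> : Ordinal Hk = ord0 by apply/val_inj.
  by rewrite E0 !eqxx.
- have -> : Ordinal Hk = ord_max by apply/val_inj.
  by rewrite E1.
Qed.

Lemma derA (p : {mpoly R[2]}) :
  mderiv ord_max (msym sw p) = msym sw (mderiv ord0 p).
Proof.
apply/mpolyP => m.
rewrite mcoeff_mderiv !mcoeff_sym mcoeff_mderiv mnmE /sw tpermL.
congr (_ *+ _); congr (mcoeff _ p).
apply/mnmP => i; rewrite !mnmE.
by have := sw_max_eq i; rewrite /sw => ->.
Qed.

Lemma msymXi (i : 'I_2) : msym sw ('X_i : {mpoly R[2]}) = 'X_(sw i).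
Proof. by rewrite /msym mmapX mmap1U. Qed.

Lemma msymXu : msym sw (Xu R) = Xv R.
Proof. by rewrite /Xu /Xv msymXi /sw tpermL. Qed.
Lemma msymXv : msym sw (Xv R) = Xu R.
Proof. by rewrite /Xu /Xv msymXi /sw tpermR. Qed.

Lemma QP (s : R) k : Qaux s k = msym sw (Paux s k).
Proof.
elim: k => [|k IH] /=.
  by rewrite msymZ msymXu.
rewrite msymB msymZ !msymM msymD !rmorphXn /= msymXu msymXv IH derA.
by rewrite (addrC (Xv R ^+ 2)).
Qed.

Lemma evalsym (p : {mpoly R[2]}) (u v : R) :
  (msym sw p).@[pt v u] = p.@[pt u v].
Proof.
have -> : msym sw p = p \mPo [tuple 'X_(sw i) | i < 2].
  rewrite /msym /comp_mpoly; congr mmap.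
  by apply: functional_extensionality => i; rewrite tnth_mktuple.
rewrite comp_mpoly_meval; apply: meval_eq => i.
rewrite tnth_mktuple mevalXU /pt.
case: i => [[|[|k]] Hk] //.
- have -> : Ordinal Hk = ord0 by apply/val_inj.
  by rewrite /sw tpermL.
- have -> : Ordinal Hk = ord_max by apply/val_inj.
  by rewrite /sw tpermR.
Qed.
End Aux.

Theorem lemma5p5 (R : realFieldType) (s u v : R) (m : nat) :
  0 < s -> (u, v) != (0, 0) -> (0 < m)%N ->
  (Pm s m).@[pt u v] = (Qm s m).@[pt v u].
Proof.
move=> _ _ _; by rewrite /Pm /Qm QP evalsym.
Qed.
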